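(* Let $\mathbb{F}$ be an algebraically closed field with $\mathrm{char}\,\mathbb{F}=2$ and $n\ge8$. Let $\underline{a}=(e_1,e_2,\mathbf{u}_1,\mathbf{v}_1,\mathbf{u}_2,\mathbf{v}_2,\mathbf{u}_3,\mathbf{v}_3,0,\ldots,0)\in\mathbf{O}^n$ and let $\underline{b}\in\mathbf{O}^n$ be such that $f(\underline{a})=f(\underline{b})$ for all $f\in S_n^{(3)}$. Then ${\rm G}_2\underline{a}={\rm G}_2\underline{b}$.
   Context: The split octonion algebra $\mathbf{O}$ is the 8-dimensional $\mathbb{F}$-vector space of formal matrices $a=\begin{pmatrix}\alpha&\mathbf{u}\\ \mathbf{v}&\beta\end{pmatrix}$ with $\alpha,\beta\in\mathbb{F}$, $\mathbf{u},\mathbf{v}\in\mathbb{F}^3$, with multiplication $\begin{pmatrix}\alpha&\mathbf{u}\\ \mathbf{v}&\beta\end{pmatrix}\begin{pmatrix}\alpha'&\mathbf{u}'\\ \mathbf{v}'&\beta'\end{pmatrix}=\begin{pmatrix}\alpha\alpha'+\mathbf{u}\cdot\mathbf{v}'&\alpha\mathbf{u}'+\beta'\mathbf{u}-\mathbf{v}\times\mathbf{v}'\\ \alpha'\mathbf{v}+\beta\mathbf{v}'+\mathbf{u}\times\mathbf{u}'&\beta\beta'+\mathbf{v}\cdot\mathbf{u}'\end{pmatrix}$ (dot product and cross product on $\mathbb{F}^3$). Trace $\mathrm{tr}(a)=\alpha+\beta$, norm $n(a)=\alpha\beta-\mathbf{u}\cdot\mathbf{v}$. With $\mathbf{c}_1,\mathbf{c}_2,\mathbf{c}_3$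 the standard basis of $\mathbb{F}^3$: $e_1$ has $\alpha=1$ and all else $0$, $e_2$ has $\beta=1$ and all else $0$, $\mathbf{u}_i$ has $\mathbf{u}=\mathbf{c}_i$ and all else $0$, $\mathbf{v}_i$ has $\mathbf{v}=\mathbf{c}_i$ and all else $0$. ${\rm G}_2=\mathrm{Aut}(\mathbf{O})$ acts diagonally on $\mathbf{O}^n$. $S_n^{(3)}$ is the set of functions on $\mathbf{O}^n$: $\underline{a}\mapsto n(a_i)$, $\underline{a}\mapsto\mathrm{tr}(a_i)$ ($1\le i\le n$), $\underline{a}\mapsto\mathrm{tr}(a_ia_j)$ ($1\le i<j\le n$), and $\underline{a}\mapsto\mathrm{tr}((a_ia_j)a_k)$ ($1\le i<j<k\le n$). *)

(* Defs.v *)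
(* Split octonions over a field F, written in the
   "vector matrix" (Zorn) model of the paper. *)
From HB Require Import structures.
From mathcomp Require Import all_boot all_order all_algebra.
Set Implicit Arguments. Unset Strict Implicit. Unset Printing Implicit Defensive.
Import GRing.Theory.
Local Open Scope ring_scope.

Section Oct.
Variable F : fieldType.

Record vec3 := V3 { c1 : F; c2 : F; c3 : F }.

Definition vdot (x y : vec3) : F := c1 x * c1 y + c2 x * c2 y + c3 x * c3 y.
Definition vcross (x y : vec3) : vec3 :=
  V3 (c2 x * c3 y - c3 x * c2 y) (c3 x * c1 y - c1 x * c3 y)
     (c1 x * c2 y - c2 x * c1 y).
Definition vadd (x y : vec3) : vec3 := V3 (c1 x + c1 y) (c2 x + c2 y) (c3 x + c3 y).
Definition vscale (k : F) (x : vec3) : vec3 := V3 (k * c1 x) (k * c2 x) (k * c3 x).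
Definition vopp (x : vec3) : vec3 := vscale (-1) x.
Definition vzero : vec3 := V3 0 0 0.

(* a = ( alpha  u ; v  beta ) *)
Record oct := Oct { oal : F; ou : vec3; ov : vec3; obe : F }.

Definition omul (a a' : oct) : oct :=
  Oct (oal a * oal a' + vdot (ou a) (ov a'))
      (vadd (vadd (vscale (oal a) (ou a')) (vscale (obe a') (ou a)))
            (vopp (vcross (ov a) (ov a'))))
      (vadd (vadd (vscale (oal a') (ov a)) (vscale (obe a) (ov a')))
            (vcross (ou a) (ou a')))
      (obe a * obe a' + vdot (ov a) (ou a')).

Definition oadd (a b : oct) : oct :=
  Oct (oal a + oal b) (vadd (ou a) (ou b)) (vadd (ov a) (ov b)) (obe a + obe b).
Definition oscale (k : F) (a : oct) : oct :=
  Oct (k * oal a) (vscale k (ou a)) (vscale k (ov a)) (k * obe a).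
Definition ozero : oct := Oct 0 vzero vzero 0.

Definition otr (a : oct) : F := oal a + obe a.
Definition onorm (a : oct) : F := oal a * obe a - vdot (ou a) (ov a).

Definition cv1 : vec3 := V3 1 0 0.
Definition cv2 : vec3 := V3 0 1 0.
Definition cv3 : vec3 := V3 0 0 1.
Definition oe1 : oct := Oct 1 vzero vzero 0.
Definition oe2 : oct := Oct 0 vzero vzero 1.
Definition ou_ (c : vec3) : oct := Oct 0 c vzero 0.
Definition ov_ (c : vec3) : oct := Oct 0 vzero c 0.

Definition is_G2 (g : oct -> oct) : Prop :=
  [/\ (forall x y, g (oadd x y) = oadd (g x) (g y)),
      (forall k x, g (oscale k x) = oscale k (g x)),
      (forall x y, g (omul x y) = omul (g x) (g y)) &
      bijective g].

Definition G2orbit (n : nat) (a : 'I_n -> oct) : ('I_n -> oct) -> Prop :=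
  fun c => exists g, is_G2 g /\ forall i, c i = g (a i).

Definition S3_agree (n : nat) (a b : 'I_n -> oct) : Prop :=
  [/\ (forall i, onorm (a i) = onorm (b i)),
      (forall i, otr (a i) = otr (b i)),
      (forall i j : 'I_n, (i < j)%N ->
         otr (omul (a i) (a j)) = otr (omul (b i) (b j))) &
      (forall i j k : 'I_n, (i < j)%N -> (j < k)%N ->
         otr (omul (omul (a i) (a j)) (a k)) =
         otr (omul (omul (b i) (b j)) (b k)))].

Definition std_tuple (n : nat) : 'I_n -> oct := fun i =>
  match nat_of_ord i with
  | 0 => oe1 | 1 => oe2
  | 2 => ou_ cv1 | 3 => ov_ cv1
  | 4 => ou_ cv2 | 5 => ov_ cv2
  | 6 => ou_ cv3 | 7 => ov_ cv3
  | _ => ozero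
  end.

End Oct.

(* Main.v *)
Require Import Defs.
From HB Require Import structures.
From mathcomp Require Import all_boot all_order all_algebra.
From mathcomp Require Import ring.
Set Implicit Arguments. Unset Strict Implicit. Unset Printing Implicit Defensive.
Import GRing.Theory.
Local Open Scope ring_scope.

Section P.
Variable F : fieldType.
Local Notation oct := (oct F).
Notation oo k := (@Ordinal 8 k isT).

Definition crd (x : oct) (p : 'I_8) : F :=
  match val p with
  | 0 => oal x | 1 => obe x | 2 => c1 (ou x) | 3 => c1 (ov x)
  | 4 => c2 (ou x) | 5 => c2 (ov x) | 6 => c3 (ou x) | _ => c3 (ov x) end.
Definition mk (f : 'I_8 -> F) : oct :=
  Oct (f (oo 0)) (V3 (f (oo 2)) (f (oo 4)) (f (oo 6))) (V3 (f (oo 3)) (f (oo 5)) (f (oo 7))) (f (oo 1)).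
Definition sg (p : 'I_8) : 'I_8 :=
  match val p with
  | 0 => (oo 0) | 1 => (oo 1) | 2 => (oo 3) | 3 => (oo 2) | 4 => (oo 5) | 5 => (oo 4) | 6 => (oo 7) | _ => (oo 6) end.

Lemma ord8_cases (P : 'I_8 -> Prop) :
  P (oo 0) -> P (oo 1) -> P (oo 2) -> P (oo 3) -> P (oo 4) -> P (oo 5) -> P (oo 6) -> P (oo 7) -> forall p, P p.
Proof.
move=> H0 H1 H2 H3 H4 H5 H6 H7 [m hm].
do 8 (case: m hm => [|m] hm; first by
  match goal with |- P (Ordinal ?h) => first [ rewrite (bool_irrelevance h isT) | idtac ] end).
by [].
Qed.

Lemma mkK x : mk (crd x) = x.
Proof. by case: x => a [? ? ?] [? ? ?] b. Qed.
Lemma crdK f p : crd (mk f) p = f p.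
Proof. by elim/ord8_cases: p. Qed.
Lemma eq_mk f f' : f =1 f' -> mk f = mk f'.
Proof. by move=> H; rewrite /mk !H. Qed.
Lemma crd_inj x y : (forall p, crd x p = crd y p) -> x = y.
Proof. by move=> H; rewrite -(mkK x) -(mkK y); apply: eq_mk. Qed.
Lemma sgK : involutive sg.
Proof. by elim/ord8_cases. Qed.

Definition B (x y : oct) := otr (omul x y).
Definition T (x y z : oct) := otr (omul (omul x y) z).
Definition E (p : 'I_8) : oct := mk (fun q => if val p == val q then 1 else 0).

Lemma Bsum x y : B x y = \sum_q crd x q * crd y (sg q).
Proof.
rewrite !big_ord_recr big_ord0 /=.
case: x => a [? ? ?] [? ? ?] b; case: y => a' [? ? ?] [? ? ?] b'.
rewrite /B /otr /omul /crd /= /vdot /vadd /vscale /vopp /vcross /=. ring.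
Qed.

Lemma TlinL y z x : T x y z = \sum_p crd x p * T (E p) y z.
Proof.
rewrite !big_ord_recr big_ord0 /=.
case: x => a [? ? ?] [? ? ?] b; case: y => a' [? ? ?] [? ? ?] b'.
case: z => a'' [? ? ?] [? ? ?] b''.
rewrite /T /E /mk /otr /omul /crd /= /vdot /vadd /vscale /vopp /vcross /=. ring.
Qed.

Lemma BC x y : B x y = B y x.
Proof.
case: x => a [? ? ?] [? ? ?] b; case: y => a' [? ? ?] [? ? ?] b'.
rewrite /B /otr /omul /= /vdot /vadd /vscale /vopp /vcross /=. ring.
Qed.
Lemma Bdiag x : B x x = otr x ^+ 2 - 2 * onorm x.
Proof.
case: x => a [? ? ?] [? ? ?] b.
rewrite /B /otr /onorm /omul /= /vdot /vadd /vscale /vopp /vcross /=. ring.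
Qed.
Lemma TC x y z : T x y z = T y z x.
Proof.
case: x => a [? ? ?] [? ? ?] b; case: y => a' [? ? ?] [? ? ?] b'.
case: z => a'' [? ? ?] [? ? ?] b''.
rewrite /T /otr /omul /= /vdot /vadd /vscale /vopp /vcross /=. ring.
Qed.
Lemma Tswap x y z : T x y z + T y x z =
  otr z * B x y + otr y * B x z + otr x * B y z - otr x * otr y * otr z.
Proof.
case: x => a [? ? ?] [? ? ?] b; case: y => a' [? ? ?] [? ? ?] b'.
case: z => a'' [? ? ?] [? ? ?] b''.
rewrite /B /T /otr /omul /= /vdot /vadd /vscale /vopp /vcross /=. ring.
Qed.
Lemma Tsq x y : T x x y = otr x * B x y - onorm x * otr y.
Proof.
case: x => a [? ? ?] [? ? ?] b; case: y => a' [? ? ?] [? ? ?] b'.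
rewrite /B /T /otr /onorm /omul /= /vdot /vadd /vscale /vopp /vcross /=. ring.
Qed.
Lemma BE x j : B x (E j) = crd x (sg j).
Proof.
case: x => a [? ? ?] [? ? ?] b.
elim/ord8_cases: j; rewrite /B /E /mk /otr /omul /crd /= /vdot /vadd /vscale /vopp /vcross /=; ring.
Qed.

Definition lc (c : 'I_8 -> F) (v : 'I_8 -> oct) : oct :=
  mk (fun p => \sum_k c k * crd (v k) p).

Lemma lc_lin (phi : oct -> F) : (forall x, phi x = \sum_p crd x p * phi (E p)) ->
  forall c v, phi (lc c v) = \sum_k c k * phi (v k).
Proof.
move=> H c v; rewrite H.
under eq_bigr => p _ do rewrite crdK mulr_suml.
rewrite exchange_big /=; apply: eq_bigr => k _.
rewrite (H (v k)) mulr_sumr; apply: eq_bigr => p _; by rewrite mulrA.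
Qed.

Lemma BlinL y x : B x y = \sum_p crd x p * B (E p) y.
Proof.
rewrite !big_ord_recr big_ord0 /=.
case: x => a [? ? ?] [? ? ?] b; case: y => a' [? ? ?] [? ? ?] b'.
rewrite /B /E /mk /otr /omul /crd /= /vdot /vadd /vscale /vopp /vcross /=. ring.
Qed.
Lemma BlinR x y : B x y = \sum_p crd y p * B x (E p).
Proof. rewrite BC (BlinL x); apply: eq_bigr => p _; by rewrite BC. Qed.
Lemma TlinM x z y : T x y z = \sum_p crd y p * T x (E p) z.
Proof. rewrite (TC x y z) (TlinL z x); apply: eq_bigr => p _; by rewrite (TC (E p) z x) (TC z x (E p)). Qed.
Lemma TlinR x y z : T x y z = \sum_p crd z p * T x y (E p).
Proof. rewrite (TC x y z) (TC y z x) (TlinL x y); apply: eq_bigr => p _; by rewrite (TC (E p) x y). Qed.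

Lemma B_lc c d u v u' v' : (forall k m, B (u k) (v m) = B (u' k) (v' m)) ->
  B (lc c u) (lc d v) = B (lc c u') (lc d v').
Proof.
move=> H.
rewrite (lc_lin (BlinL _)) (lc_lin (BlinL _)); apply: eq_bigr => k _; congr (_ * _).
rewrite (lc_lin (BlinR _)) (lc_lin (BlinR _)); apply: eq_bigr => m _; by rewrite H.
Qed.
Lemma T_lc c d e u v w u' v' w' :
  (forall k m l, T (u k) (v m) (w l) = T (u' k) (v' m) (w' l)) ->
  T (lc c u) (lc d v) (lc e w) = T (lc c u') (lc d v') (lc e w').
Proof.
move=> H.
rewrite (lc_lin (TlinL _ _)) (lc_lin (TlinL _ _)); apply: eq_bigr => k _; congr (_ * _).
rewrite (lc_lin (TlinM _ _)) (lc_lin (TlinM _ _)); apply: eq_bigr => m _; congr (_ * _).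
rewrite (lc_lin (TlinR _ _)) (lc_lin (TlinR _ _)); apply: eq_bigr => l _; by rewrite H.
Qed.

Lemma crdE j p : crd (E j) p = if val j == val p then 1 else 0.
Proof. by rewrite crdK. Qed.

Lemma sum_delta (j : 'I_8) (f : 'I_8 -> F) :
  \sum_k (if val j == val k then 1 else 0) * f k = f j.
Proof.
rewrite (bigD1 j) //= eqxx mul1r big1 ?addr0 // => k hk.
have -> : (val j == val k) = false by rewrite eq_sym val_eqE (negbTE hk).
by rewrite mul0r.
Qed.
Lemma sum_delta' (j : 'I_8) (f : 'I_8 -> F) :
  \sum_k f k * (if val k == val j then 1 else 0) = f j.
Proof.
rewrite -[RHS](sum_delta j f); apply: eq_bigr => k _; by rewrite mulrC eq_sym.
Qed.

Lemma lcE x : lc (crd x) E = x.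
Proof.
apply: crd_inj => p; rewrite crdK.
under eq_bigr do rewrite crdE.
exact: sum_delta'.
Qed.
Lemma lc_delta j v : lc (crd (E j)) v = v j.
Proof.
apply: crd_inj => p; rewrite crdK.
under eq_bigr do rewrite crdE.
exact: (sum_delta j (fun k => crd (v k) p)).
Qed.
End P.

Section Q.
Variable F : fieldType.
Local Notation oct := (oct F).
Variable bb : 'I_8 -> oct.
Hypothesis HB : forall k m, B (bb k) (bb m) = B (E F k) (E F m).
Hypothesis HT : forall k m l, T (bb k) (bb m) (bb l) = T (E F k) (E F m) (E F l).

Definition g x := lc (crd x) bb.
Lemma gE j : g (E F j) = bb j.
Proof. exact: lc_delta. Qed.
Lemma gB x y : B (g x) (g y) = B x y.
Proof. by rewrite -[in RHS](lcE x) -[in RHS](lcE y); apply: B_lc. Qed.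
Lemma gT x y z : T (g x) (g y) (g z) = T x y z.
Proof. by rewrite -[in RHS](lcE x) -[in RHS](lcE y) -[in RHS](lcE z); apply: T_lc. Qed.

Definition Mx : 'M[F]_8 := \matrix_(p, k) crd (bb k) p.
Definition Nx : 'M[F]_8 := \matrix_(k, p) crd (bb (sg k)) (sg p).

Lemma NM : Nx *m Mx = 1%:M.
Proof.
apply/matrixP => k m; rewrite !mxE.
have := HB m (sg k); rewrite BE sgK crdE Bsum => H.
transitivity (if val m == val k then 1 else (0:F)).
  rewrite -H; apply: eq_bigr => p _; by rewrite !mxE mulrC.
by rewrite val_eqE eq_sym; case: (k == m).
Qed.

Lemma MN p q : \sum_k crd (bb k) p * crd (bb (sg k)) (sg q) = if val p == val q then 1 else 0.
Proof.
have := mulmx1C NM => /matrixP /(_ p q); rewrite !mxE => H.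
transitivity ((p == q)%:R : F); last by rewrite val_eqE; case: (p == q).
by rewrite -H; apply: eq_bigr => k _; rewrite !mxE.
Qed.

Lemma recon y : lc (fun k => B y (bb (sg k))) bb = y.
Proof.
apply: crd_inj => p; rewrite crdK.
under eq_bigr do rewrite Bsum mulr_suml.
rewrite exchange_big /=.
transitivity (\sum_q crd y q * (if val q == val p then 1 else 0)); last exact: sum_delta'.
apply: eq_bigr => q _; rewrite eq_sym -MN mulr_sumr.
apply: eq_bigr => k _; ring.
Qed.

Lemma gM x y : g (omul x y) = omul (g x) (g y).
Proof.
rewrite -(recon (g (omul x y))) -(recon (omul (g x) (g y))).
apply: eq_mk => p; apply: eq_bigr => k _; congr (_ * _).
rewrite -gE gB.
change (T x y (E F (sg k)) = T (g x) (g y) (g (E F (sg k)))); by rewrite gT.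
Qed.

Lemma crdD (x y : oct) p : crd (oadd x y) p = crd x p + crd y p.
Proof. by elim/ord8_cases: p. Qed.
Lemma crdZ c (x : oct) p : crd (oscale c x) p = c * crd x p.
Proof. by elim/ord8_cases: p. Qed.

Lemma gD x y : g (oadd x y) = oadd (g x) (g y).
Proof.
apply: crd_inj => p; rewrite crdD !crdK -big_split /=.
apply: eq_bigr => k _; by rewrite crdD mulrDl.
Qed.
Lemma gZ c x : g (oscale c x) = oscale c (g x).
Proof.
apply: crd_inj => p; rewrite crdZ !crdK mulr_sumr.
apply: eq_bigr => k _; by rewrite crdZ mulrA.
Qed.

Definition h y := lc (fun k => B y (bb (sg k))) (E F).
Lemma ghK : cancel h g.
Proof.
move=> y; rewrite -[RHS]recon; apply: eq_mk => p; apply: eq_bigr => k _; congr (_ * _).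
rewrite crdK.
under eq_bigr do rewrite crdE.
exact: sum_delta'.
Qed.
Lemma hgK : cancel g h.
Proof.
move=> x; apply: crd_inj => k; rewrite crdK.
under eq_bigr do rewrite crdE.
rewrite sum_delta' -gE gB BE sgK //.
Qed.

Lemma g_G2 : is_G2 g.
Proof. split; [exact: gD | exact: gZ | exact: gM | exact: Bijective hgK ghK]. Qed.

Lemma g0 : g (ozero F) = ozero F.
Proof.
apply: crd_inj => p; rewrite crdK big1 //; last by move=> k _; elim/ord8_cases: k; rewrite mul0r.
by elim/ord8_cases: p.
Qed.
End Q.

Section R.
Variable F : fieldType.
Variables (n : nat) (a b : 'I_n -> oct F).
Hypothesis H : S3_agree a b.

Lemma HB2 (i j : 'I_n) : B (b i) (b j) = B (a i) (a j).
Proof.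
case: H => Hn Ht H2 H3.
case: (ltngtP i j) => hij; first by symmetry; exact: H2.
  by rewrite BC (BC (a i)); symmetry; exact: H2.
have -> : i = j by apply: val_inj.
by rewrite !Bdiag Hn Ht.
Qed.

Definition Pt (i j k : 'I_n) := T (b i) (b j) (b k) = T (a i) (a j) (a k).
Lemma Pcyc (i j k : 'I_n) : Pt i j k -> Pt j k i.
Proof. by rewrite /Pt (TC (b i)) (TC (a i)); apply. Qed.
Lemma Pswap (i j k : 'I_n) : Pt i j k -> Pt j i k.
Proof.
case: H => Hn Ht H2 H3.
rewrite /Pt => E; apply: (addrI (T (b i) (b j) (b k))).
by rewrite Tswap [in RHS]E Tswap !HB2 -!Ht.
Qed.
Lemma Psorted (i j k : 'I_n) : (i <= j)%N -> (j <= k)%N -> Pt i j k.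
Proof.
case: H => Hn Ht H2 H3.
rewrite leq_eqVlt => /orP [/eqP /val_inj -> | hij].
  by move=> _; rewrite /Pt !Tsq HB2 -!Hn -!Ht.
rewrite leq_eqVlt => /orP [/eqP /val_inj -> | hjk].
  apply: Pcyc; apply: Pcyc; by rewrite /Pt !Tsq HB2 -!Hn -!Ht.
by symmetry; apply: H3.
Qed.
Lemma HT3 (i j k : 'I_n) : Pt i j k.
Proof.
case: (leqP i j) => hij; case: (leqP j k) => hjk.
- exact: Psorted.
- case: (leqP i k) => hik.
    by apply: Pcyc; apply: Pswap; apply: Psorted => //; apply: ltnW.
  by apply: Pcyc; apply: Psorted => //; apply: ltnW.
- case: (leqP i k) => hik.
    by apply: Pswap; apply: Psorted => //; apply: ltnW.
  by apply: Pcyc; apply: Pcyc; apply: Psorted => //; apply: ltnW.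
- by apply: Pcyc; apply: Pcyc; apply: Pswap; apply: Psorted; apply: ltnW.
Qed.
End R.

Lemma G2_comp (F : fieldType) (g1 g2 : oct F -> oct F) :
  is_G2 g1 -> is_G2 g2 -> is_G2 (g1 \o g2).
Proof.
case=> D1 Z1 M1 B1 [D2 Z2 M2 B2]; split => /=.
- by move=> x y; rewrite D2 D1.
- by move=> k x; rewrite Z2 Z1.
- by move=> x y; rewrite M2 M1.
- exact: bij_comp.
Qed.

Lemma G2_inv (F : fieldType) (g1 : oct F -> oct F) :
  is_G2 g1 -> exists h, [/\ is_G2 h, cancel g1 h & cancel h g1].
Proof.
case=> D1 Z1 M1 [h K1 K2]; exists h; split => //; split.
- by move=> x y; rewrite -{1}(K2 x) -{1}(K2 y) -D1 K1.
- by move=> k x; rewrite -{1}(K2 x) -Z1 K1.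
- by move=> x y; rewrite -{1}(K2 x) -{1}(K2 y) -M1 K1.
- exact: Bijective K2 K1.
Qed.

Lemma aE (F : fieldType) n (hn : (8 <= n)%N) (k : 'I_8) :
  std_tuple F (widen_ord hn k) = E F k.
Proof. by elim/ord8_cases: k. Qed.

Lemma aZ (F : fieldType) n (i : 'I_n) : (8 <= i)%N -> std_tuple F i = ozero F.
Proof.
rewrite /std_tuple; case: i => m hm /=.
by do 8 (case: m hm => [|m] hm //).
Qed.

Lemma B0 (F : fieldType) (y : oct F) : B (ozero F) y = 0.
Proof.
case: y => a' [? ? ?] [? ? ?] b'.
rewrite /B /otr /omul /= /vdot /vadd /vscale /vopp /vcross /=. ring.
Qed.

Theorem lemma7p9 (F : closedFieldType) (hchar : 2%N \in [pchar F])
  (n : nat) (hn : (8 <= n)%N) (b : 'I_n -> oct F) :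
  S3_agree (@std_tuple F n) b ->
  forall c : 'I_n -> oct F, G2orbit (@std_tuple F n) c <-> G2orbit b c.
Proof.
move=> H.
set a := @std_tuple F n.
pose bb k := b (widen_ord hn k).
have HBb k m : B (bb k) (bb m) = B (E F k) (E F m).
  by rewrite /bb (HB2 H) !aE.
have HTb k m l : T (bb k) (bb m) (bb l) = T (E F k) (E F m) (E F l).
  by rewrite /bb (HT3 H) !aE.
have gb i : b i = g bb (a i).
  case: (ltnP i 8) => hi.
    have -> : i = widen_ord hn (Ordinal hi) by apply: val_inj.
    by rewrite /a aE gE.
  rewrite /a aZ // g0 -(recon HBb (b i)).
  apply: crd_inj => p; rewrite crdK big1; first by elim/ord8_cases: p.
  move=> k _; rewrite /bb (HB2 H) aZ // B0 mul0r //.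
have gG := g_G2 HBb HTb.
have [h [hG K1 K2]] := G2_inv gG.
split.
- case=> g1 [g1G Hc]; exists (g1 \o h); split; first exact: G2_comp.
  by move=> i; rewrite Hc gb /= K1.
- case=> g1 [g1G Hc]; exists (g1 \o g bb); split; first exact: G2_comp.
  by move=> i; rewrite Hc gb.
Qed.
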